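(* Let $G$ be a $K_4$-free graph with $n$ vertices and $e$ edges, let $P$ be a greedy partition of $G$ with size $r=r(P)$, and let $r_2$ be the number of cliques of $P$ of size at least $2$. Then $e\le r(n-r)+r_2(n-r-r_2)$.
   Context: A good partition $P$ of $V(G)$ is a partition of $V(G)$ into disjoint sets $C_1, \dots, C_r$ (the cliques of $P$), each inducing a complete subgraph of $G$, indexed so that $|C_1|\le\dots\le |C_r|$; its size is $r(P)=r$. It is a greedy partition if for every $i\ge1$ the set $C_1\cup\dots\cup C_i$ induces a subgraph with no complete subgraph on $|C_i|+1$ vertices. For $K_4$-free $G$, every clique of $P$ has size $1$, $2$ or $3$. *)

(* Defs.v *)
From HB Require Import structures.
From mathcomp Require Import all_boot all_order all_algebra.
Set Implicit Arguments. Unset Strict Implicit. Unset Printing Implicit Defensive.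

Definition simple_graph (T : finType) (adj : rel T) : Prop :=
  (forall x y, adj x y = adj y x) /\ (forall x, ~~ adj x x).

Definition is_clique (T : finType) (adj : rel T) (A : {set T}) : bool :=
  [forall x in A, forall y in A, (x != y) ==> adj x y].

Definition K4_free (T : finType) (adj : rel T) : Prop :=
  forall A : {set T}, #|A| = 4 -> ~~ is_clique adj A.

Definition num_edges (T : finType) (adj : rel T) : nat :=
  #|[set A : {set T} | (#|A| == 2) && is_clique adj A]|.

(* Union of the first i cliques C_1 ∪ ... ∪ C_i of a sequence (0-indexed list). *)
Definition prefix_union (T : finType) (P : seq {set T}) (i : nat) : {set T} :=
  \bigcup_(j < i) nth set0 P j.

Definition good_partition (T : finType) (adj : rel T) (P : seq {set T}) : Prop :=
  [/\ forall C, C \in P -> C != set0,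
      forall C, C \in P -> is_clique adj C,
      forall i j, i < j -> j < size P -> [disjoint nth set0 P i & nth set0 P j],
      prefix_union P (size P) = [set: T]
    & sorted leq [seq #|C| | C : {set T} <- P]].

Definition greedy_partition (T : finType) (adj : rel T) (P : seq {set T}) : Prop :=
  good_partition adj P /\
  forall i, i < size P ->
    forall A : {set T}, A \subset prefix_union P i.+1 ->
      #|A| = #|nth set0 P i|.+1 -> ~~ is_clique adj A.

(* Main.v *)
Require Import Defs.
From HB Require Import structures.
From mathcomp Require Import all_boot all_order all_algebra.
From mathcomp Require Import zify.
Import Order.TTheory GRing.Theory Num.Theory.
Set Implicit Arguments. Unset Strict Implicit. Unset Printing Implicit Defensive.

Lemma card_bigcup_le (T I : finType) (A : pred I) (F : I -> {set T}) :
  (#|\bigcup_(i in A) F i| <= \sum_(i in A) #|F i|)%N.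
Proof.
elim/big_rec2: _ => [|i n U _ le]; first by rewrite cards0.
by rewrite (leq_trans (leq_card_setU _ _).1) // leq_add2l.
Qed.

Lemma cliqueP (T : finType) (adj : rel T) (A : {set T}) x y :
  is_clique adj A -> x \in A -> y \in A -> x != y -> adj x y.
Proof.
move=> /forall_inP H xA yA nxy.
by move: (H x xA) => /forall_inP /(_ y yA) /implyP; apply.
Qed.

Definition ecount (T : finType) (adj : rel T) (U : {set T}) :=
  #|[set A : {set T} | (A \subset U) && (#|A| == 2) && is_clique adj A]|.

Lemma key (T : finType) (adj : rel T) (U C : {set T}) c :
  simple_graph adj -> [disjoint U & C] -> #|C| = c ->
  (forall x, x \in U -> exists2 y, y \in C & ~~ adj x y) ->
  (ecount adj (U :|: C) <= ecount adj U + 'C(c, 2) + #|U| * c.-1)%N.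
Proof.
move=> [sym irr] dUC cC hU.
set EU := [set A : {set T} | (A \subset U) && (#|A| == 2) && is_clique adj A].
set EC := [set A : {set T} | A \subset C & #|A| == 2].
set X := \bigcup_(x in U) [set [set x; y] | y in [set y in C | adj x y]].
have sub : [set A : {set T} | (A \subset U :|: C) && (#|A| == 2) && is_clique adj A]
   \subset EU :|: EC :|: X.
  apply/subsetP => A; rewrite inE => /andP[/andP[sA cA] clA].
  have [AU|nAU] := boolP (A \subset U).
    by rewrite !inE AU cA clA.
  have [AC|nAC] := boolP (A \subset C).
    by rewrite !inE AC cA orbT.
  move/cards2P: cA => [a [b [nab eA]]].
  have aA : a \in A by rewrite eA !inE eqxx.
  have bA : b \in A by rewrite eA !inE eqxx orbT.
  have hab := cliqueP clA aA bA nab.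
  have hba : adj b a by rewrite sym.
  have aUC := subsetP sA a aA; have bUC := subsetP sA b bA.
  rewrite !inE in aUC bUC.
  apply/setUP; right; apply/bigcupP.
  case/orP: aUC => aU; case/orP: bUC => bU.
  - by case/negP: nAU; rewrite eA; apply/subsetP => z; rewrite !inE => /orP[]/eqP->.
  - exists a => //; apply/imsetP; exists b; first by rewrite inE bU hab.
    by [].
  - exists b => //; apply/imsetP; exists a; first by rewrite inE aU hba.
    by rewrite eA setUC.
  - by case/negP: nAC; rewrite eA; apply/subsetP => z; rewrite !inE => /orP[]/eqP->.
rewrite /ecount (leq_trans (subset_leq_card sub)) //.
rewrite (leq_trans (leq_card_setU _ _).1) // (leq_trans (leq_add (leq_card_setU _ _).1 (leqnn _))) //.
rewrite -/EU cards_draws cC leq_add2l.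
rewrite (leq_trans (card_bigcup_le _ _)) // -sum_nat_const leq_sum // => x xU.
rewrite (leq_trans (leq_imset_card _ _)) //.
have [y yC nxy] := hU x xU.
have : [set y0 in C | adj x y0] \subset C :\ y.
  apply/subsetP => z; rewrite !inE => /andP[zC axz]; rewrite zC andbT.
  by apply: contraNneq nxy => <-.
move/subset_leq_card => /leq_trans; apply.
by move: (cardsD1 y C); rewrite yC cC => ->.
Qed.
Lemma puS (T : finType) (P : seq {set T}) k :
  prefix_union P k.+1 = prefix_union P k :|: nth set0 P k.
Proof. by rewrite /prefix_union big_ord_recr. Qed.

Lemma pu_disj (T : finType) (adj : rel T) (P : seq {set T}) k :
  good_partition adj P -> k < size P -> [disjoint prefix_union P k & nth set0 P k].
Proof.
case=> _ _ hd _ _ kP; rewrite -setI_eq0; apply/eqP/setP => x.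
rewrite !inE; apply/negbTE/negP => /andP[/bigcupP[i _ xi] xk].
by rewrite (disjointFr (hd _ _ (ltn_ord i) kP) xi) in xk.
Qed.

Lemma inv (T : finType) (adj : rel T) (P : seq {set T}) k :
  simple_graph adj -> K4_free adj -> greedy_partition adj P -> (k <= size P)%N ->
  let n := #|prefix_union P k| in
  let q := count (fun C : {set T} => (2 <= #|C|)%N) (take k P) in
  ((ecount adj (prefix_union P k))%:Z <= k%:Z * (n%:Z - k%:Z) + q%:Z * (n%:Z - k%:Z - q%:Z))%R
  /\ (k + q <= n)%N.
Proof.
move=> sg k4 [gp hg]; elim: k => [_|k IH kP] /=.
  have -> : prefix_union P 0 = set0 by rewrite /prefix_union big_ord0.
  have -> : ecount adj set0 = 0%N.
    rewrite /ecount; apply/eqP; rewrite cards_eq0; apply/eqP/setP => A.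
    by rewrite !inE subset0; case: eqP => // ->; rewrite cards0.
  by rewrite take0 cards0.
have kP' : (k < size P)%N by [].
move: (IH (ltnW kP)) => /= [IH1 IH2].
set U := prefix_union P k in IH1 IH2; set C := nth set0 P k.
have dUC := pu_disj gp kP'.
have CP : C \in P by apply: mem_nth.
case: (gp) => ne cl _ _ _.
have hU : forall x, x \in U -> exists2 y, y \in C & ~~ adj x y.
  move=> x xU; case: (boolP [exists y in C, ~~ adj x y]) => [/exists_inP[y yC ny]|hn].
    by exists y.
  have xC : x \notin C by rewrite (disjointFr dUC xU).
  have := hg k kP' (x |: C).
  rewrite puS cardsU1 xC -/C => /(_ _ erefl) /negP; case.
    by apply/subsetP => z; rewrite !inE => /orP[/eqP->|zC]; rewrite ?xU ?zC ?orbT.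
  apply/forall_inP => u uA; apply/forall_inP => v vA; apply/implyP => nuv.
  move: hn; rewrite negb_exists_in => /forall_inP hn.
  move: uA vA nuv; rewrite !inE => /orP[/eqP->|uC] /orP[/eqP->|vC] nuv.
  - by rewrite eqxx in nuv.
  - by move: (hn v vC); rewrite negbK.
  - by move: (hn u uC); rewrite negbK (proj1 sg).
  - exact: cliqueP (cl C CP) uC vC nuv.
have hk := key sg dUC erefl hU.
rewrite puS -/U -/C.
have nC : #|U :|: C| = (#|U| + #|C|)%N.
  by rewrite cardsU (_ : U :&: C = set0) ?cards0 ?subn0 //; apply/eqP; rewrite setI_eq0.
have qC : count (fun C : {set T} => (2 <= #|C|)%N) (take k.+1 P) =
          (count (fun C : {set T} => (2 <= #|C|)%N) (take k P) + (2 <= #|C|))%N.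
  by rewrite (take_nth set0 kP') -cats1 count_cat /= addn0.
rewrite nC qC.
have c1 : (1 <= #|C|)%N by rewrite card_gt0 ne.
have c3 : (#|C| <= 3)%N.
  rewrite leqNgt; apply/negP => c4.
  have : (0 < #|[set A : {set T} | A \subset C & #|A| == 4]|)%N.
    by rewrite cards_draws bin_gt0.
  rewrite card_gt0 => /set0Pn[A]; rewrite inE => /andP[AC /eqP A4].
  move: (k4 A A4) => /negP; apply.
  apply/forall_inP => u uA; apply/forall_inP => v vA; apply/implyP => nuv.
  exact: cliqueP (cl C CP) (subsetP AC u uA) (subsetP AC v vA) nuv.
set e' := ecount adj (U :|: C) in hk *.
set e := ecount adj U in hk IH1 *.
set n := #|U| in hk IH1 IH2 *.
set q := count _ (take k P) in IH1 IH2 *.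
move: hk c1 c3; case: #|C| => [|[|[|[|c]]]] //= hk _ _.
- rewrite bin_small // in hk; split; last by lia.
  lia.
- rewrite bin2 /= in hk; split; last by lia.
  lia.
- rewrite bin2 /= in hk; split; last by lia.
  lia.
Qed.

Local Open Scope ring_scope.

Theorem claim6 (T : finType) (adj : rel T) (P : seq {set T}) :
  simple_graph adj -> K4_free adj -> greedy_partition adj P ->
  let n : int := #|T|%:Z in
  let r : int := (size P)%:Z in
  let r2 : int := (count (fun C : {set T} => (2 <= #|C|)%N) P)%:Z in
  ((num_edges adj)%:Z <= r * (n - r) + r2 * (n - r - r2))%R.
Proof.
move=> sg k4 gp /=.
have [[_ _ _ hU _] _] := gp.
have [H _] := inv sg k4 gp (leqnn (size P)).
move: H; rewrite hU take_size cardsT.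
suff -> : ecount adj [set: T] = num_edges adj by [].
by rewrite /ecount /num_edges; apply: eq_card => A; rewrite !inE subsetT.
Qed.
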